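(* Let $\sigma:\mathbb R\to\mathbb R$ be a differentiable activation and let $f_{\theta_{\mathrm{wide}}}$ be a fully-connected network model with $M_{\mathrm{wide}}$ parameters. Then every function $f^*$ in the function space of any narrower fully-connected network satisfies $O_{f_{\theta_{\mathrm{wide}}}}(f^* )<M_{\mathrm{wide}}$; that is, $f^*$ has $n$-sample LLR-guarantee for the model $f_{\theta_{\mathrm{wide}}}$ for some $n<M_{\mathrm{wide}}$.
   Context: A fully-connected network $\mathrm{NN}(\{m_l\}_{l=0}^L)$, $L\geq2$, with $m_0=d$ and $m_L=1$ has parameters $\theta=(W^{[1]},b^{[1]},\dots,W^{[L]},b^{[L]})$ with $W^{[l]}\in\mathbb R^{m_l\times m_{l-1}}$, $b^{[l]}\in\mathbb R^{m_l}$ (a vector in $\mathbb R^M$, $M=\sum_{l=0}^{L-1}(m_l+1)m_{l+1}$), and output $f_\theta(x)=W^{[L]}f^{[L-1]}(x)+b^{[L]}$, where $f^{[0]}(x)=x$ and $f^{[l]}(x)=\sigma(W^{[l]}f^{[l-1]}(x)+b^{[l]})$ for $l\in[L-1]$. A network $\mathrm{NN}(\{m_l\})$ is narrower than $\mathrm{NN}'(\{m'_l\})$ (same $L$) if $m'_0=m_0$, $m'_L=m_L$, $m'_l\geq m_l$ for all $l\in[L-1]$, and $\sum_{l=1}^{L-1}(m'_l-m_l)>0$. The loss $\ell:\mathbb R\times\mathbb R\to[0,\infty)$ is continuously differentiable with $\ell(u,v)=0$ iff $u=v$. For a model $h_\theta$, $\theta\in\mathbb R^M$, and $f^*$ in its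 function space: $\mathcal M_{f^*}=\{\theta:h_\theta=f^*\}$; a dataset of size $n$ from $f^*$ is $\{(x_i,f^*(x_i))\}_{i=1}^n$ with empirical loss $\frac1n\sum_i\ell(u(x_i),f^*(x_i))$ (identically $0$ if $n=0$); the tangent hyperplane at $\theta'$ is $\{h(\cdot;\theta')+a^\top\nabla_\theta h(\cdot;\theta'):a\in\mathbb R^M\}$; $f^*$ has $n$-sample LLR-guarantee if for some dataset of size $n$ from $f^*$ and some $\theta'\in\mathcal M_{f^*}$ the set of minimizers of the empirical loss over the tangent hyperplane at $\theta'$ is exactly $\{f^*\}$; $O_h(f^* )$ is the smallest such $n\geq0$. *)

(* Defs.v *)
From HB Require Import structures.
From mathcomp Require Import all_boot all_order all_algebra.
From mathcomp Require Import all_classical all_reals all_analysis.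
Set Implicit Arguments. Unset Strict Implicit. Unset Printing Implicit Defensive.
Import Order.TTheory GRing.Theory Num.Theory.
Import numFieldNormedType.Exports.
Local Open Scope classical_set_scope.
Local Open Scope ring_scope.

(* Architecture.  A fully-connected network NN({m_l}_{l=0}^L) with m_0 = d *)
(* and m_L = 1 is described by d and the list hs = [m_1; ...; m_{L-1}] of  *)
(* hidden widths, so L = size hs + 1 and L >= 2 iff hs is nonempty.        *)

Definition width (d : nat) (hs : seq nat) (l : nat) : nat :=
  nth 0%N (d :: rcons hs 1%N) l.

Definition depth (hs : seq nat) : nat := (size hs).+1.

(* a crude bound strictly larger than every m_l and every m_l + 1 index *)
Definition pbound (d : nat) (hs : seq nat) : nat := (d + sumn hs).+2.

(* Parameter coordinates: (l, i, j) stands for W^{[l+1]}_{i j} when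
   j < m_l, and for b^{[l+1]}_i when j = m_l;  here l < L, i < m_{l+1}. *)
Definition valid_idx (d : nat) (hs : seq nat)
  (p : 'I_(depth hs) * 'I_(pbound d hs) * 'I_(pbound d hs)) : bool :=
  let: (l, i, j) := p in
  ((i < width d hs l.+1) && (j <= width d hs l))%N.

Definition PIdx (d : nat) (hs : seq nat) :=
  {p : 'I_(depth hs) * 'I_(pbound d hs) * 'I_(pbound d hs) | @valid_idx d hs p}.

(* The number of parameters M = #|PIdx d hs| = sum_l (m_l + 1) m_{l+1}. *)
Definition nparams (d : nat) (hs : seq nat) : nat := #|{: PIdx d hs}|.

Definition idx_nat (d : nat) (hs : seq nat) (p : PIdx d hs) : nat * nat * nat :=
  let: (l, i, j) := val p in (val l, val i, val j).

Section NN.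
Variable R : realType.

(* theta_(l,i,j) (0 outside the valid range; never used there) *)
Definition getp (d : nat) (hs : seq nat) (th : PIdx d hs -> R) (l i j : nat) : R :=
  if [pick p : PIdx d hs | idx_nat p == (l, i, j)] is Some p then th p else 0.

Definition preact (d : nat) (hs : seq nat) (th : PIdx d hs -> R) (l : nat)
  (v : nat -> R) (i : nat) : R :=
  \sum_(j < width d hs l) getp th l i j * v j + getp th l i (width d hs l).

Fixpoint hidden (sigma : R -> R) (d : nat) (hs : seq nat) (th : PIdx d hs -> R)
  (x : 'rV[R]_d) (k : nat) : nat -> R :=
  match k with
  | 0 => fun i => if (insub i : option 'I_d) is Some j then x ord0 j else 0
  | k'.+1 => fun i => sigma (preact th k' (hidden sigma th x k') i)
  end.

Definition nn_out (sigma : R -> R) (d : nat) (hs : seq nat) (th : PIdx d hs -> R)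
  (x : 'rV[R]_d) : R :=
  preact th (depth hs).-1 (hidden sigma th x (depth hs).-1) 0.

Definition nn_fspace (sigma : R -> R) (d : nat) (hs : seq nat) : set ('rV[R]_d -> R) :=
  [set f | exists th : PIdx d hs -> R, f = nn_out sigma th].

End NN.
Arguments nn_fspace [R] sigma d hs.

(* NN(d,hs) is narrower than NN(d,hs') (same d, same L, output width 1) *)
Definition narrower (hs hs' : seq nat) : Prop :=
  size hs = size hs' /\
  (forall l, (l < size hs)%N -> (nth 0%N hs l <= nth 0%N hs' l)%N) /\
  (0 < \sum_(l < size hs) (nth 0%N hs' l - nth 0%N hs l))%N.

Section LLR.
Variable R : realType.

Definition upd (T : eqType) (th : T -> R) (p : T) (t : R) : T -> R :=
  fun q => if q == p then th q + t else th q.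

Definition partial (T : eqType) (F : (T -> R) -> R) (th : T -> R) (p : T) : R :=
  derive1 (fun t => F (upd th p t)) 0.

Definition tangent_plane (T : finType) (U : Type) (h : (T -> R) -> U -> R)
  (th' : T -> R) : set (U -> R) :=
  [set u | exists a : T -> R,
     u = fun x => h th' x + \sum_(p : T) a p * partial (fun th => h th x) th' p].

Definition emp_loss (ell : R -> R -> R) (U : Type) (n : nat) (X : 'I_n -> U)
  (fs : U -> R) (u : U -> R) : R :=
  if n == 0%N then 0 else n%:R^-1 * \sum_(i < n) ell (u (X i)) (fs (X i)).

Definition LLR_guarantee (ell : R -> R -> R) (T : finType) (U : Type)
  (h : (T -> R) -> U -> R) (fs : U -> R) (n : nat) : Prop :=
  exists (X : 'I_n -> U) (th' : T -> R),
    h th' = fs /\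
    [set u | tangent_plane h th' u /\
             forall v, tangent_plane h th' v ->
               emp_loss ell X fs u <= emp_loss ell X fs v] = [set fs].

Definition C1_fun2 (ell : R -> R -> R) : Prop :=
  let f := fun z : R * R => ell z.1 z.2 in
  (forall z, differentiable f z) /\
  (forall v : R * R, continuous (fun z => 'd f z v)).

Definition admissible_loss (ell : R -> R -> R) : Prop :=
  (forall u v, 0 <= ell u v) /\ (forall u v, ell u v = 0 <-> u = v) /\ C1_fun2 ell.

End LLR.

(* Main.v *)
Require Import Defs.
From HB Require Import structures.
From mathcomp Require Import all_boot all_order all_algebra.
From mathcomp Require Import all_classical all_reals all_analysis.
From mathcomp Require Import zify.
Import Order.TTheory GRing.Theory Num.Theory.
Import numFieldNormedType.Exports.
Local Open Scope classical_set_scope.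
Local Open Scope ring_scope.

Section Points.
Variable R : realType.

Lemma sum_lin (T : eqType) (U : Type) (g : T -> U -> R) (s : seq T) (a b : T -> R) (c : R) x :
  \sum_(p <- s) (a p - c * b p) * g p x =
  \sum_(p <- s) a p * g p x - c * \sum_(p <- s) b p * g p x.
Proof.
rewrite mulr_sumr -sumrB; apply: eq_bigr => p _.
by rewrite mulrBl mulrA.
Qed.

Lemma span_points (T : eqType) (U : Type) (g : T -> U -> R) (s : seq T) :
  exists n, (n <= size s)%N /\ exists X : 'I_n -> U, forall a : T -> R,
  (forall i, \sum_(p <- s) a p * g p (X i) = 0) ->
  forall x, \sum_(p <- s) a p * g p x = 0.
Proof.
elim: s => [|q s IH].
  exists 0%N; split => //.
  have X : 'I_0 -> U by case=> m Hm; exfalso; by rewrite ltn0 in Hm.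
  by exists X => a _ x; rewrite big_nil.
have [n [Hn [X HX]]] := IH.
pose F (a : T -> R) x := \sum_(p <- q :: s) a p * g p x.
have [[as0 [Has0 [xs Hxs]]]|Hno] := pselect
  (exists a, (forall i, F a (X i) = 0) /\ exists x, F a x != 0).
- exists n.+1; split; first by rewrite /= ltnS.
  pose X' (i : 'I_n.+1) := if unlift ord_max i is Some j then X j else xs.
  exists X' => a Ha x.
  have HX'j j : X' (lift ord_max j) = X j by rewrite /X' liftK.
  have HX'm : X' ord_max = xs by rewrite /X' unlift_none.
  have Hq : as0 q != 0.
    apply/negP => /eqP Hq0; move/negP: Hxs; apply; apply/eqP.
    rewrite /F big_cons Hq0 mul0r add0r; apply: HX => i.
    by have := Has0 i; rewrite /F big_cons Hq0 mul0r add0r.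
  pose c := a q / as0 q.
  pose b p := a p - c * as0 p.
  have Hbq : b q = 0 by by rewrite /b /c -mulrA mulVf // mulr1 subrr.
  have Fb y : F b y = F a y - c * F as0 y by rewrite /F sum_lin.
  have Sb y : F b y = \sum_(p <- s) b p * g p y by rewrite /F big_cons Hbq mul0r add0r.
  have Hb0 y : F b y = 0.
    rewrite Sb; apply: HX => i; rewrite -Sb Fb Has0 mulr0 subr0.
    by have := Ha (lift ord_max i); rewrite HX'j.
  have Hxs0 : F a xs = 0 by have := Ha ord_max; rewrite HX'm.
  have Hc : c = 0.
    have := Hb0 xs; rewrite Fb Hxs0 sub0r => /eqP; rewrite oppr_eq0 mulf_eq0.
    by case/orP => [/eqP //|]; rewrite (negbTE Hxs).
  by have := Hb0 x; rewrite Fb Hc mul0r subr0.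
- exists n; split; first by rewrite /= (leq_trans Hn).
  exists X => a Ha x.
  case: (eqVneq (F a x) 0) => // Hne; exfalso; apply: Hno.
  by exists a; split => //; exists x.
Qed.

End Points.
Section Net.
Variable R : realType.

Lemma nth_le_sumn (s : seq nat) k : (nth 0%N s k <= sumn s)%N.
Proof.
elim: s k => [|x s IH] [|k] //=; first exact: leq_addr.
exact: leq_trans (IH k) (leq_addl _ _).
Qed.

Lemma width_lt (d : nat) hs l : (width d hs l < pbound d hs)%N.
Proof.
rewrite /width /pbound; case: l => [|l] /=; first by lia.
rewrite nth_rcons; case: ifP => _.
  by have := nth_le_sumn hs l; lia.
by case: ifP; lia.
Qed.

Lemma width_gt0 (d : nat) hs l : (0 < width d hs l.+1)%N -> (l < depth hs)%N.
Proof.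
rewrite /width /depth /= nth_rcons.
case: ifP => [H _|_]; first by rewrite ltnW.
by case: ifP => [/eqP -> _|].
Qed.

Lemma width_last (d : nat) hs : width d hs (size hs).+1 = 1%N.
Proof. by rewrite /width /= nth_rcons ltnn eqxx. Qed.

Lemma width_le (d : nat) hs hs' l : narrower hs hs' -> (width d hs l <= width d hs' l)%N.
Proof.
move=> [Hsz [Hle _]]; rewrite /width; case: l => [|l] //=.
rewrite !nth_rcons -Hsz; case: ifP => H; first exact: Hle.
by case: ifP.
Qed.

Lemma idx_nat_inj (d : nat) hs : injective (@idx_nat d hs).
Proof.
move=> [[[l1 i1] j1] h1] [[[l2 i2] j2] h2] /= [E1 E2 E3]; apply: val_inj => /=.
by congr (_, _, _); apply: val_inj.
Qed.

Definition valid_nat (d : nat) hs (l i j : nat) : bool :=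
  [&& (l < depth hs)%N, (i < width d hs l.+1)%N & (j <= width d hs l)%N].

Lemma idx_valid (d : nat) hs (p : PIdx d hs) l i j :
  idx_nat p = (l, i, j) -> valid_nat d hs l i j.
Proof.
case: p => [[[l1 i1] j1] /= /andP [h1 h2]] [<- <- <-].
by rewrite /valid_nat ltn_ord h1 h2.
Qed.

Lemma getp_invalid (d : nat) hs (th : PIdx d hs -> R) l i j :
  ~~ valid_nat d hs l i j -> getp th l i j = 0.
Proof.
move=> Hv; rewrite /getp; case: pickP => // p /eqP Hp.
by rewrite (@idx_valid _ _ p _ _ _ Hp) in Hv.
Qed.

Lemma getp_F (d : nat) hs (F : nat * nat * nat -> R) l i j :
  getp (fun p : PIdx d hs => F (idx_nat p)) l i j =
  if valid_nat d hs l i j then F (l, i, j) else 0.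
Proof.
rewrite /getp; case: pickP => [p /eqP Hp|H]; first by rewrite (@idx_valid _ _ p _ _ _ Hp) Hp.
case: ifP => // /and3P [Hl Hi Hj].
have Hi' : (i < pbound d hs)%N by apply: leq_trans Hi (ltnW (width_lt _ _ _)).
have Hj' : (j < pbound d hs)%N by apply: leq_ltn_trans Hj (width_lt _ _ _).
have Hv : valid_idx (Ordinal Hl, Ordinal Hi', Ordinal Hj') by rewrite /= Hi Hj.
by have := H (exist (@valid_idx d hs) _ Hv); rewrite /idx_nat /= eqxx.
Qed.

Lemma getp_upd (d : nat) hs (th : PIdx d hs -> R) p0 t l i j :
  (l, i, j) != idx_nat p0 -> getp (upd th p0 t) l i j = getp th l i j.
Proof.
move=> Hne; rewrite /getp; case: pickP => [p /eqP Hp|H] //.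
rewrite /upd; case: eqP => // Ep; by rewrite -Ep Hp eqxx in Hne.
Qed.

End Net.
Section Emb.
Variables (R : realType) (sigma : R -> R) (d : nat) (hs hs' : seq nat).
Hypothesis Hn : narrower hs hs'.
Variable thN : PIdx d hs -> R.

Definition Cond (thW : PIdx d hs' -> R) := forall l i, (i < width d hs l.+1)%N ->
  (forall j, (j < width d hs' l)%N ->
     getp thW l i j = if (j < width d hs l)%N then getp thN l i j else 0) /\
  getp thW l i (width d hs' l) = getp thN l i (width d hs l).

Lemma preact_emb thW l vW vN i : Cond thW -> (i < width d hs l.+1)%N ->
  (forall j, (j < width d hs l)%N -> vW j = vN j) ->
  preact thW l vW i = preact thN l vN i.
Proof.
move=> HC Hi Hv; have [HCw HCb] := HC l i Hi; rewrite /preact HCb; congr (_ + _).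
rewrite (big_ord_widen _ (fun j : nat => getp thN l i j * vN j) (@width_le d hs hs' l Hn)) [in RHS]big_mkcond /=; apply: eq_bigr => j _.
rewrite HCw //; case: ifP => Hj; last by rewrite mul0r.
by rewrite Hv.
Qed.

Lemma hidden_emb thW x k i : Cond thW -> (i < width d hs k)%N ->
  hidden sigma thW x k i = hidden sigma thN x k i.
Proof.
move=> HC; elim: k i => [|k IH] i Hi //=.
by congr sigma; apply: preact_emb => // j Hj; apply: IH.
Qed.

Lemma nn_emb thW : Cond thW -> nn_out sigma thW = nn_out sigma thN.
Proof.
move=> HC; apply: funext => x; rewrite /nn_out.
have Hd : depth hs' = depth hs by rewrite /depth; case: Hn => ->.
rewrite Hd /depth /=; apply: preact_emb => //; first by rewrite width_last.
by move=> j Hj; apply: hidden_emb.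
Qed.

Definition FW (t : nat * nat * nat) : R :=
  let: (l, i, j) := t in
  if j == width d hs' l then getp thN l i (width d hs l)
  else if (j < width d hs l)%N then getp thN l i j else 0.
Definition thW0 : PIdx d hs' -> R := fun p => FW (idx_nat p).

Lemma thW0_cond : Cond thW0.
Proof.
move=> l i Hi.
have Hl : (l < depth hs')%N.
  apply: (@width_gt0 d); apply: leq_trans (@width_le d hs hs' l.+1 Hn); lia.
have Hi' : (i < width d hs' l.+1)%N by apply: leq_trans Hi (@width_le d hs hs' _ Hn).
split; last by rewrite /thW0 getp_F /valid_nat Hl Hi' leqnn /= eqxx.
move=> j Hj; rewrite /thW0 getp_F /valid_nat Hl Hi' ltnW //=.
by rewrite ltn_eqF.
Qed.

Lemma upd_cond thW p0 t : Cond thW ->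
  (forall l i j, (i < width d hs l.+1)%N -> (l, i, j) != idx_nat p0) ->
  Cond (upd thW p0 t).
Proof.
move=> HC Hp l i Hi; have [H1 H2] := HC l i Hi; split.
  by move=> j Hj; rewrite getp_upd ?H1 //; apply: Hp.
by rewrite getp_upd ?H2 //; apply: Hp.
Qed.

End Emb.
Theorem mainTheorem12 (R : realType) (sigma : R -> R) (ell : R -> R -> R)
  (d : nat) (hs_wide : seq nat) :
  (forall x : R, derivable sigma x 1) ->
  admissible_loss ell ->
  (0 < size hs_wide)%N ->
  forall hs : seq nat, narrower hs hs_wide ->
  forall fs : 'rV[R]_d -> R, nn_fspace sigma d hs fs ->
  exists n : nat, (n < nparams d hs_wide)%N /\
    LLR_guarantee ell (fun th : PIdx d hs_wide -> R => nn_out sigma th) fs n.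
Proof.
move=> _ [Hge [Heq _]] _ hs Hn fs [thN ->].
have Hn' := Hn; case: Hn' => [Hsz [Hle Hsum]].
have [l0 Hl0] : exists l0 : 'I_(size hs), (nth 0%N hs l0 < nth 0%N hs_wide l0)%N.
  case: (boolP [exists l0 : 'I_(size hs), (nth 0%N hs l0 < nth 0%N hs_wide l0)%N]).
    by move/existsP.
  rewrite negb_exists => /forallP Hall; exfalso.
  move: Hsum; rewrite big1 // => l _; have := Hall l; lia.
have Hw0 : width d hs l0.+1 = nth 0%N hs l0 by rewrite /width /= nth_rcons ltn_ord.
have Hw0' : width d hs_wide l0.+1 = nth 0%N hs_wide l0.
  by rewrite /width /= nth_rcons -Hsz (ltn_ord l0).
have Hl : (l0 < depth hs_wide)%N by have := ltn_ord l0; rewrite /depth -Hsz; lia.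
have Hi : (width d hs l0.+1 < pbound d hs_wide)%N.
  apply: leq_trans (width_lt d hs_wide l0.+1); by rewrite Hw0 Hw0' ltnS ltnW.
have Hj : (0 < pbound d hs_wide)%N by [].
have Hv : valid_idx (Ordinal Hl, Ordinal Hi, Ordinal Hj) by rewrite /= Hw0 Hw0' Hl0.
pose p0 : PIdx d hs_wide := exist (@valid_idx d hs_wide) _ Hv.
have Hp0 : idx_nat p0 = (val l0, width d hs l0.+1, 0%N) by [].
pose th' := @thW0 R d hs hs_wide thN.
have HC := @thW0_cond R d hs hs_wide Hn thN.
have Hth' : nn_out sigma th' = nn_out sigma thN by exact: (@nn_emb R sigma d hs hs_wide Hn thN th' HC).
have Hupd t : nn_out sigma (upd th' p0 t) = nn_out sigma thN.
  apply: (@nn_emb R sigma d hs hs_wide Hn thN); apply: upd_cond => // l i j Hi1; rewrite Hp0.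
  apply/eqP => -[El Ei _]; move: Hi1; rewrite El Ei; lia.
pose g p x := partial (fun th => nn_out sigma th x) th' p.
have Hg0 x : g p0 x = 0.
  rewrite /g /partial.
  have -> : (fun t => nn_out sigma (upd th' p0 t) x) = cst (nn_out sigma thN x).
    by apply: funext => t; rewrite Hupd.
  exact: derive1_cst.
pose s := enum [pred p | p != p0].
have [n [Hns [X HX]]] := @span_points R _ _ g s.
have Hsum_s (a : PIdx d hs_wide -> R) x :
    \sum_(p : PIdx d hs_wide) a p * g p x = \sum_(p <- s) a p * g p x.
  rewrite (bigD1 p0) //= Hg0 mulr0 add0r /s big_enum; apply: eq_bigl => p.
  by rewrite !inE.
exists n; split.
  apply: (leq_ltn_trans Hns); rewrite /s /nparams -cardE.
  have Hc : (0 < #|{: PIdx d hs_wide}|)%N by apply/card_gt0P; exists p0.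
  rewrite (eq_card (B := predC1 p0)); last by move=> p; rewrite !inE.
  by rewrite cardC1 ltn_predL; exact: Hc.
pose h := fun th : PIdx d hs_wide -> R => nn_out sigma th.
have Hfs0 : emp_loss ell X (nn_out sigma thN) (nn_out sigma thN) = 0.
  rewrite /emp_loss; case: ifP => // _; rewrite big1 ?mulr0 // => i _.
  by apply/Heq.
have Hloss0 v : 0 <= emp_loss ell X (nn_out sigma thN) v.
  rewrite /emp_loss; case: ifP => // _; apply: mulr_ge0; first by rewrite invr_ge0.
  by apply: sumr_ge0 => i _; apply: Hge.
have TPfs : tangent_plane h th' (nn_out sigma thN).
  exists (fun _ => 0); apply: funext => x; rewrite /h Hth' big1 ?addr0 // => p _.
  by rewrite mul0r.
exists X, th'; split; first exact: Hth'.
apply/seteqP; split => u /=; last first.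
  by move=> ->; split => // v _; rewrite Hfs0.
move=> [[a Ha] Hmin].
have := Hmin _ TPfs; rewrite Hfs0 => Hle0.
have Hpt i : u (X i) = nn_out sigma thN (X i).
  move: Hle0; rewrite /emp_loss; case: ifP => [/eqP Hn0|Hn0 Hle0].
    by move=> _; have := ltn_ord i; rewrite {2}Hn0.
  have Hs : \sum_(i < n) ell (u (X i)) (nn_out sigma thN (X i)) = 0.
    apply/eqP; rewrite eq_le sumr_ge0 ?andbT; last by move=> j _; apply: Hge.
    have Hnp : 0 < (n%:R : R)^-1 by rewrite invr_gt0 ltr0n lt0n Hn0.
    by rewrite -(pmulr_rle0 _ Hnp).
  by apply/Heq; apply: (psumr_eq0P _ Hs) => // j _; apply: Hge.
have HA i : \sum_(p <- s) a p * g p (X i) = 0.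
  have := Hpt i; rewrite Ha /= Hth' => H.
  rewrite -Hsum_s; apply: (addrI (nn_out sigma thN (X i))); rewrite addr0; exact: H.
rewrite Ha; apply: funext => x; rewrite /h Hth' Hsum_s HX ?addr0 //.
Qed.
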